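(* If $X\sim\mathcal N(0,\Sigma)$ is an $n$-dimensional Gaussian random vector and $\rho(x)=\max\{0,x\}$ acts entrywise, then $\mathbb E\|\rho(X)\|_2\ge\frac12\mathbb E\|X\|_2$. *)

(* Defs.v *)
From HB Require Import structures.
From mathcomp Require Import all_boot all_order all_algebra.
From mathcomp Require Import all_classical all_reals all_analysis.
Set Implicit Arguments. Unset Strict Implicit. Unset Printing Implicit Defensive.
Import Order.TTheory GRing.Theory Num.Theory.
Local Open Scope classical_set_scope.
Local Open Scope ring_scope.

(* Euclidean norm of a column vector (the library norm on matrices is the sup norm). *)
Definition l2norm {R : realType} {n : nat} (v : 'cV[R]_n) : R :=
  Num.sqrt (\sum_(i < n) v i ord0 ^+ 2).

Definition relu {R : realType} {n : nat} (v : 'cV[R]_n) : 'cV[R]_n :=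
  \col_i Num.max 0 (v i ord0).

Definition iid_std_normal {R : realType} (d : measure_display)
  (T : measurableType d) (P : probability T R) (k : nat) (Z : 'I_k -> T -> R) : Prop :=
  (forall j, measurable_fun setT (Z j)) /\
  (forall j (B : set R), measurable B -> P (Z j @^-1` B) = normal_prob 0 1 B) /\
  (forall B : 'I_k -> set R, (forall j, measurable (B j)) ->
     P (\bigcap_(j in [set: 'I_k]) (Z j @^-1` B j)) =
     (\prod_(j < k) P (Z j @^-1` B j))%E).

Definition centered_gaussian {R : realType} (d : measure_display)
  (T : measurableType d) (P : probability T R) (n : nat)
  (X : T -> 'cV[R]_n) (Sigma : 'M[R]_n) : Prop :=
  exists (k : nat) (A : 'M[R]_(n, k)) (Z : 'I_k -> T -> R),
    [/\ iid_std_normal P Z, Sigma = A *m A^T &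
        forall t, X t = A *m (\col_j Z j t)].

(* Main.v *)
Require Import Defs.
From HB Require Import structures.
From mathcomp Require Import all_boot all_order all_algebra.
From mathcomp Require Import all_classical all_reals all_analysis.
From mathcomp Require Import measurable_realfun.
From mathcomp Require Import lra.
Import Order.TTheory GRing.Theory Num.Theory.
Local Open Scope classical_set_scope.
Local Open Scope ring_scope.

Section S.
Context {R : realType}.
Local Open Scope ereal_scope.
Lemma normal_sym (B : set R) : measurable B ->
  normal_prob 0 1 ((-%R : R -> R) @^-1` B) = normal_prob 0 1 B.
Proof.
move=> mB; rewrite /normal_prob.
transitivity (\int[lebesgue_measure]_(x in (-%R : R -> measurableTypeR R) @^-1` B)
   ((fun y => (normal_pdf 0 1 y)%:E) \o (-%R : R -> measurableTypeR R)) x).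
  apply: eq_integral => x _ /=.
  by rewrite /normal_pdf oner_eq0 /normal_fun !subr0 sqrrN.
rewrite -ge0_integral_pushforward//=; last 2 first.
  by apply/measurable_EFinP; apply: measurable_funTS; exact: measurable_normal_pdf.
  by move=> y _; rewrite lee_fin normal_pdf_ge0.
by apply: eq_measure_integral => //= A mA AS; exact: lebesgue_measureN.
Qed.
End S.

Section Sym.
Context {R : realType} (d : measure_display) (T : measurableType d) (P : probability T R).
Variables (k : nat) (Z : 'I_k -> T -> R).

Definition rect (B : 'I_k -> set R) : set (k.-tuple R) :=
  \bigcap_(j in [set: 'I_k]) ((fun x : k.-tuple R => tnth x j) @^-1` B j).

Definition Grect : set (set (k.-tuple R)) :=
  [set S | exists B, (forall j, measurable (B j)) /\ rect B = S].

Lemma Grect_measurable : Grect `<=` measurable.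
Proof.
move=> _ [B [mB <-]]; apply: fin_bigcap_measurable => // j _.
by have := measurable_tnth j measurableT (mB j); rewrite setTI.
Qed.

Lemma measurable_tupleE : @measurable _ (k.-tuple R) = <<s Grect >>.
Proof.
rewrite eqEsubset; split; last first.
  by apply: smallest_sub => //; [exact: sigma_algebra_measurable | exact: Grect_measurable].
apply: smallest_sub; first exact: smallest_sigma_algebra.
elim/big_ind: _ => //.
  by move=> X Y HX HY; rewrite subUset.
move=> i _ _ [A mA <-]; apply: sub_sigma_algebra.
exists (fun j => if j == i then A else setT); split.
  by move=> j; case: ifP.
rewrite /rect predeqE => x; split.
  by move=> /(_ i I) /=; rewrite eqxx.
by move=> [_ /= Ax] j _ /=; case: ifP => // /eqP ->.
Qed.

Hypothesis hZ : iid_std_normal P Z.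

Definition Zt (t : T) : k.-tuple R := [tuple Z j t | j < k].
Definition Zn (t : T) : k.-tuple R := [tuple - Z j t | j < k].

Lemma mZt : measurable_fun setT Zt.
Proof.
apply/measurable_fun_tnthP => i.
rewrite (_ : _ \o _ = Z i); first exact: hZ.1.
by apply/funext => t /=; rewrite tnth_mktuple.
Qed.

Lemma mZn : measurable_fun setT Zn.
Proof.
apply/measurable_fun_tnthP => i.
rewrite (_ : _ \o _ = \- Z i); first exact/measurable_funN/hZ.1.
by apply/funext => t /=; rewrite tnth_mktuple.
Qed.

Definition Ztm : {mfun T >-> k.-tuple R} := HB.pack Zt (isMeasurableFun.Build _ _ _ _ _ mZt).
Definition Znm : {mfun T >-> k.-tuple R} := HB.pack Zn (isMeasurableFun.Build _ _ _ _ _ mZn).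

Local Open Scope ereal_scope.

Lemma distrE (A : set (k.-tuple R)) : measurable A ->
  distribution P Ztm A = distribution P Znm A.
Proof.
move=> mA.
apply: (measure_unique Grect (fun _ => setT)) => //.
- exact: measurable_tupleE.
- move=> _ _ [B1 [mB1 <-]] [B2 [mB2 <-]]; exists (fun j => B1 j `&` B2 j); split.
    by move=> j; exact: measurableI.
  rewrite /rect predeqE => x; split.
    by move=> H; split => j _; have [] := H j I.
  by move=> [H1 H2] j _; split; [exact: H1|exact: H2].
- move=> _; exists (fun _ => setT); split => //.
  by rewrite /rect predeqE => x; split.
- by rewrite predeqE => x; split => // _; exists 0%N.
- move=> _ [B [mB <-]].
  change (P (Zt @^-1` rect B) = P (Zn @^-1` rect B)).
  have -> : Zt @^-1` rect B = \bigcap_(j in [set: 'I_k]) (Z j @^-1` B j).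
    rewrite /rect predeqE => t; split => H j _; have := H j I; rewrite /= tnth_mktuple //.
  have -> : Zn @^-1` rect B = \bigcap_(j in [set: 'I_k]) (Z j @^-1` ((-%R : R -> R) @^-1` B j)).
    rewrite /rect predeqE => t; split => H j _; have := H j I; rewrite /= tnth_mktuple //.
  have mB' : forall j, measurable ((-%R : R -> R) @^-1` B j).
    move=> j; have := measurable_funN (@measurable_id _ R setT) measurableT (mB j).
    by rewrite setTI.
  rewrite hZ.2.2 // hZ.2.2 //; apply: eq_bigr => j _.
  by rewrite hZ.2.1 // hZ.2.1 // normal_sym.
- by move=> _; change (P (Zt @^-1` setT) < +oo); rewrite preimage_setT probability_setT ltry.
Qed.

Lemma int_sym (h : k.-tuple R -> R) : measurable_fun setT h -> (forall x, 0 <= h x)%R ->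
  \int[P]_t (h (Zt t))%:E = \int[P]_t (h (Zn t))%:E.
Proof.
move=> mh h0.
have mEh : measurable_fun setT (EFin \o h) by exact/measurable_EFinP.
transitivity (\int[P]_(t in Zt @^-1` setT) ((EFin \o h) \o Zt) t).
  by rewrite preimage_setT.
rewrite -(ge0_integral_pushforward mZt) //; last by move=> y _; rewrite lee_fin.
transitivity (\int[P]_(t in Zn @^-1` setT) ((EFin \o h) \o Zn) t); last first.
  by rewrite preimage_setT.
rewrite -(ge0_integral_pushforward mZn) //; last by move=> y _; rewrite lee_fin.
apply: (eq_measure_integral (distribution P Znm)).
  exact: mZt.
move=> H S mS _; exact (distrE S mS).
Qed.
End Sym.
Lemma sqrtD_le {R : realType} (a b : R) : 0 <= a -> 0 <= b ->
  Num.sqrt (a + b) <= Num.sqrt a + Num.sqrt b.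
Proof.
move=> a0 b0.
have sa := sqrtr_ge0 a; have sb := sqrtr_ge0 b.
rewrite -[X in _ <= X]ger0_norm ?addr_ge0 // -sqrtr_sqr.
apply: ler_wsqrtr.
rewrite sqrrD !sqr_sqrtr //.
have : 0 <= Num.sqrt a * Num.sqrt b by exact: mulr_ge0.
lra.
Qed.

Lemma relu_sq {R : realType} (y : R) :
  Num.max 0 y ^+ 2 + Num.max 0 (- y) ^+ 2 = y ^+ 2.
Proof.
have [y0|y0] : 0 <= y \/ y <= 0.
  by case: (boolP (0 <= y)) => h; [left|right; rewrite leNgt; apply: contraNN h => /ltW].
  rewrite (max_idPr y0) (max_idPl (_ : - y <= 0)) ?oppr_le0 //; lra.
rewrite (max_idPl y0) (max_idPr (_ : 0 <= - y)) ?oppr_ge0 // sqrrN; lra.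
Qed.

Lemma l2norm_relu {R : realType} n (x : 'cV[R]_n) :
  l2norm x <= l2norm (relu x) + l2norm (relu (- x)).
Proof.
rewrite /l2norm.
have -> : \sum_(i < n) x i ord0 ^+ 2 =
  \sum_(i < n) relu x i ord0 ^+ 2 + \sum_(i < n) relu (- x) i ord0 ^+ 2.
  rewrite -big_split /=; apply: eq_bigr => i _; rewrite !mxE relu_sq //.
apply: sqrtD_le; apply: sumr_ge0 => i _; exact: sqr_ge0.
Qed.

Lemma mnorm {R : realType} k n (F : 'I_n -> k.-tuple R -> R) :
  (forall i, measurable_fun setT (F i)) ->
  measurable_fun setT (fun z => Num.sqrt (\sum_(i < n) F i z ^+ 2)).
Proof.
move=> mF.
apply: (measurableT_comp (continuous_measurable_fun (@sqrt_continuous R))).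
by apply: measurable_sum => i; apply: measurable_funX.
Qed.

Lemma mlin {R : realType} k n (A : 'M[R]_(n, k)) i :
  measurable_fun setT (fun z : k.-tuple R => (A *m \col_j tnth z j) i ord0).
Proof.
rewrite (_ : (fun z => _) = (fun z : k.-tuple R => \sum_(j < k) A i j * tnth z j)).
  apply: measurable_sum => j; apply: measurable_funM => //.
  exact: measurable_tnth.
by apply/funext => z; rewrite !mxE; apply: eq_bigr => j _; rewrite mxE.
Qed.

Lemma mh1 {R : realType} k n (A : 'M[R]_(n, k)) :
  measurable_fun setT (fun z : k.-tuple R => l2norm (A *m \col_j tnth z j)).
Proof. by apply: mnorm => i; exact: mlin. Qed.

Lemma mh2 {R : realType} k n (A : 'M[R]_(n, k)) :
  measurable_fun setT (fun z : k.-tuple R => l2norm (relu (A *m \col_j tnth z j))).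
Proof.
rewrite /l2norm.
under eq_fun do under eq_bigr do rewrite mxE.
apply: mnorm => i.
have := measurable_maxr (measurable_cst (0:R)) (@mlin R k n A i); exact.
Qed.
Arguments Zt {R d T k} Z t.
Arguments Zn {R d T k} Z t.
Arguments mZt {R d T P k Z}.
Arguments mZn {R d T P k Z}.
Arguments int_sym {R d T P k Z}.
Theorem mainTheorem17 (R : realType) (d : measure_display) (T : measurableType d)
  (P : probability T R) (n : nat) (X : T -> 'cV[R]_n) (Sigma : 'M[R]_n) :
  centered_gaussian P X Sigma ->
  ((2^-1)%:E * \int[P]_t (l2norm (X t))%:E <= \int[P]_t (l2norm (relu (X t)))%:E)%E.
Proof.
move=> [k [A [Z [hZ _ hX]]]].
have eX t : X t = A *m \col_j tnth (Zt Z t) j.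
  by rewrite hX; congr (_ *m _); apply/matrixP => i j; rewrite !mxE tnth_mktuple.
have eNX t : - X t = A *m \col_j tnth (Zn Z t) j.
  by rewrite hX -mulmxN; congr (_ *m _); apply/matrixP => i j; rewrite !mxE tnth_mktuple.
have hsym : (\int[P]_t (l2norm (relu (X t)))%:E = \int[P]_t (l2norm (relu (- X t)))%:E)%E.
  under eq_integral do rewrite eX.
  under [RHS]eq_integral do rewrite eNX.
  apply: (int_sym hZ (fun z => l2norm (relu (A *m \col_j tnth z j))) (@mh2 R k n A)) => z.
  by apply: sqrtr_ge0.
have m1 : measurable_fun setT (fun t => (l2norm (relu (X t)))%:E).
  apply/measurable_EFinP.
  rewrite (_ : (fun t => _) = (fun z => l2norm (relu (A *m \col_j tnth z j))) \o Zt Z); last first.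
    by apply/funext => t /=; rewrite eX.
  exact: measurableT_comp (@mh2 R k n A) (mZt hZ).
have m2 : measurable_fun setT (fun t => (l2norm (relu (- X t)))%:E).
  apply/measurable_EFinP.
  rewrite (_ : (fun t => _) = (fun z => l2norm (relu (A *m \col_j tnth z j))) \o Zn Z); last first.
    by apply/funext => t /=; rewrite eNX.
  exact: measurableT_comp (@mh2 R k n A) (mZn hZ).
have m0 : measurable_fun setT (fun t => (l2norm (X t))%:E).
  apply/measurable_EFinP.
  rewrite (_ : (fun t => _) = (fun z => l2norm (A *m \col_j tnth z j)) \o Zt Z); last first.
    by apply/funext => t /=; rewrite eX.
  exact: measurableT_comp (@mh1 R k n A) (mZt hZ).
have hle : (\int[P]_t (l2norm (X t))%:E <=
    \int[P]_t (l2norm (relu (X t)))%:E + \int[P]_t (l2norm (relu (- X t)))%:E)%E.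
  rewrite -ge0_integralD //; last 2 first.
    by move=> t _; rewrite lee_fin sqrtr_ge0.
    by move=> t _; rewrite lee_fin sqrtr_ge0.
  apply: ge0_le_integral => //.
  - by move=> t _; rewrite lee_fin sqrtr_ge0.
  - by apply: emeasurable_funD.
  - by move=> t _; rewrite -EFinD lee_fin l2norm_relu.
rewrite -hsym in hle.
have a0 : (0 <= \int[P]_t (l2norm (X t))%:E)%E.
  by apply: integral_ge0 => t _; rewrite lee_fin sqrtr_ge0.
move: hle a0.
set b := (\int[P]_t (l2norm (relu (X t)))%:E)%E.
set a := (\int[P]_t (l2norm (X t))%:E)%E.
case: b => [r| |]; last first.
- move=> h a0; have := le_trans a0 h.
  by [].
- by move=> _ _; rewrite leey.
case: a => [a| |] //.
rewrite -EFinD -EFinM !lee_fin => h _; lra.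
Qed.
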